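(* Let $X$ be a scattered topological space such that $\mathrm{Homeo}(X)$ is fully transitive, and assume each similarity class of $X$ is infinite. Then $\mathrm{Homeo}(X)$ is topologically perfect.
   Context: A topological space (not assumed Hausdorff) is scattered if every nonempty subset has a point isolated in that subset. For scattered $X$, $\mathrm{Homeo}(X)$ carries the topology of pointwise convergence on $X$. Two points $x,y\in X$ are similar if there are neighbourhoods $U_x\ni x$, $U_y\ni y$ and a homeomorphism $h\colon U_x\to U_y$ with $h(x)=y$; the equivalence classes are similarity classes. $\mathrm{Homeo}(X)$ is fully transitive if for every $k$ and all $k$-tuples of pairwise distinct points $(x_1,\dots,x_k)$, $(y_1,\dots,y_k)$ with $x_i$ similar to $y_i$, some homeomorphism $g$ satisfies $g(x_i)=y_i$ for all $i$. A topological group is topologically perfect if its derived subgroup is dense. *)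

(* Defs.v *)
From HB Require Import structures.
From mathcomp Require Import all_boot all_order all_algebra.
From mathcomp Require Import all_classical all_reals all_analysis.
Set Implicit Arguments. Unset Strict Implicit. Unset Printing Implicit Defensive.
Local Open Scope classical_set_scope.

Definition scattered (X : topologicalType) : Prop :=
  forall A : set X, A !=set0 ->
    exists x, A x /\ exists W : set X, open W /\ W `&` A = [set x].

Definition is_homeo (X : topologicalType) (f : X -> X) : Prop :=
  continuous f /\ exists g : X -> X, [/\ cancel f g, cancel g f & continuous g].

Definition homeo_between (X : topologicalType) (U V : set X) (h : X -> X) : Prop :=
  exists g : X -> X,
    [/\ h @` U = V, g @` V = U,
        (forall u, U u -> g (h u) = u), (forall v, V v -> h (g v) = v) &
        ({within U, continuous h} /\ {within V, continuous g})].

Definition similar_pts (X : topologicalType) (x y : X) : Prop :=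
  exists (U V : set X) (h : X -> X),
    [/\ open U, U x, open V, V y & homeo_between U V h /\ h x = y].

Definition fully_transitive (X : topologicalType) : Prop :=
  forall (k : nat) (xs ys : 'I_k -> X),
    injective xs -> injective ys -> (forall i, similar_pts (xs i) (ys i)) ->
    exists g : X -> X, is_homeo g /\ forall i, g (xs i) = ys i.

(* The derived (commutator) subgroup of Homeo(X): finite products of
   commutators a b a^-1 b^-1 of homeomorphisms (inverses of commutators are
   commutators, so this is the subgroup they generate). *)
Inductive derived_homeo (X : topologicalType) : (X -> X) -> Prop :=
  | derived_id : derived_homeo id
  | derived_comm : forall (a a' b b' h : X -> X),
      continuous a -> continuous a' -> cancel a a' -> cancel a' a ->
      continuous b -> continuous b' -> cancel b b' -> cancel b' b ->
      derived_homeo h -> derived_homeo (a \o b \o a' \o b' \o h).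

(* Homeo(X), with the topology of pointwise convergence (subspace of the
   product topology {ptws X -> X}), is topologically perfect: its derived
   subgroup is dense in it. *)
Definition homeo_topologically_perfect (X : topologicalType) : Prop :=
  [set f : {ptws X -> X} | is_homeo f]
    `<=` closure [set f : {ptws X -> X} | derived_homeo f].

(* Main.v *)
Require Import Defs.
From mathcomp Require Import all_boot all_order all_algebra.
From mathcomp Require Import all_classical all_reals all_analysis.
Local Open Scope classical_set_scope.

Section Top.
Variable X : topologicalType.

Lemma closure_of_agree (A : set (X -> X)) (f : X -> X) :
  (forall s : seq X, exists h, A h /\ forall x, x \in s -> h x = f x) ->
  closure (A : set {ptws X -> X}) (f : {ptws X -> X}).
Proof.
move=> key.
pose D (s : seq X) := [set h : X -> X | A h /\ forall x, x \in s -> h x = f x].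
pose F := [set B : set (X -> X) | exists s, D s `<=` B].
have FF : Filter F.
  split.
  - by exists [::].
  - move=> P Q [s Ps] [t Qt]; exists (s ++ t) => h [Ah Hh]; split.
      by apply: Ps; split => // x xs; apply: Hh; rewrite mem_cat xs.
    by apply: Qt; split => // x xs; apply: Hh; rewrite mem_cat xs orbT.
  - by move=> P Q PQ [s Ps]; exists s => h /Ps /PQ.
have cv : nbhs (f : {ptws X -> X}) `<=` F.
  have := (@cvg_sup (X -> X) X (fun i => Topological.class
    (initial_topology (fun g : X -> X => g i))) F f FF).2.
  move=> H; apply: H => i.
  apply/cvg_image => //.
    by rewrite eqEsubset; split => // y _; exists (fun _ => y).
  move=> B /= Bnb.
  exists ((fun g : X -> X => g i) @^-1` B).
    exists [:: i] => h [_ Hh]; rewrite /= Hh ?mem_head //.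
    exact: nbhs_singleton.
  rewrite eqEsubset; split => [y [g Bg <-] //|y By].
  by exists (fun _ => y).
move=> B /cv [s Ds]; have [h [Ah Hh]] := key s.
by exists h; split => //; apply: Ds.
Qed.
End Top.

Section Alg.
Set Implicit Arguments.
Variable X : topologicalType.

Definition cnj (p q : X) := exists g : X -> X, is_homeo g /\ g p = q.

Lemma homeo_id : is_homeo (@id X).
Proof. split; first by move=> x; exact: cvg_id. by exists id; split => // x; exact: cvg_id. Qed.

Lemma homeo_comp (f g : X -> X) : is_homeo f -> is_homeo g -> is_homeo (f \o g).
Proof.
move=> [cf [f' [ff' f'f cf']]] [cg [g' [gg' g'g cg']]].
split; first by move=> x; apply: continuous_comp; [apply: cg|apply: cf].
exists (g' \o f'); split.
- by move=> x /=; rewrite ff' gg'.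
- by move=> x /=; rewrite g'g f'f.
- by move=> x; apply: continuous_comp; [apply: cf'|apply: cg'].
Qed.

Lemma homeo_inv (f : X -> X) : is_homeo f ->
  exists f', [/\ is_homeo f', cancel f f' & cancel f' f].
Proof.
move=> [cf [f' [ff' f'f cf']]]; exists f'; split => //.
by split => //; exists f.
Qed.

Lemma homeo_similar (g : X -> X) p : is_homeo g -> similar_pts p (g p).
Proof.
move=> [cg [g' [gg' g'g cg']]].
exists setT, setT, g; split => //; try exact: openT.
split => //; exists g'; split.
- by rewrite eqEsubset; split => // y _; exists (g' y) => //.
- by rewrite eqEsubset; split => // y _; exists (g y) => //.
- by move=> u _; rewrite gg'.
- by move=> v _; rewrite g'g.
- by split; apply: continuous_subspaceT.
Qed.

Lemma cnj_refl p : cnj p p.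
Proof. by exists id; split => //; apply: homeo_id. Qed.

Lemma cnj_sym p q : cnj p q -> cnj q p.
Proof.
move=> [g [hg <-]]; have [g' [hg' gg' _]] := homeo_inv hg.
by exists g'; split.
Qed.

Lemma cnj_trans p q r : cnj p q -> cnj q r -> cnj p r.
Proof.
move=> [g [hg <-]] [g2 [hg2 <-]]; exists (g2 \o g); split => //.
exact: homeo_comp.
Qed.

Hypothesis FT : fully_transitive X.

Lemma similar_cnj p q : similar_pts p q -> cnj p q.
Proof.
move=> spq.
have [g [hg Hg]] := FT (k := 1) (xs := fun _ : 'I_1 => p) (ys := fun _ : 'I_1 => q)
  (fun i j _ => etrans (ord1 i) (esym (ord1 j))) (fun i j _ => etrans (ord1 i) (esym (ord1 j))) (fun _ => spq).
by exists g; split => //; apply: (Hg ord0).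
Qed.

Lemma FTfin (I : finType) (xs ys : I -> X) :
  injective xs -> injective ys -> (forall i, cnj (xs i) (ys i)) ->
  exists g : X -> X, is_homeo g /\ forall i, g (xs i) = ys i.
Proof.
move=> ixs iys cxy.
have i1 : injective (xs \o (@enum_val I predT)).
  by move=> i j /= /ixs /enum_val_inj.
have i2 : injective (ys \o (@enum_val I predT)).
  by move=> i j /= /iys /enum_val_inj.
have [g [hg Hg]] := FT i1 i2 (fun i => match cxy (enum_val i) with
   ex_intro h (conj hh e) => eq_ind _ (fun y => similar_pts _ y) (homeo_similar _ hh) _ e end).
by exists g; split => // i; have := Hg (enum_rank i); rewrite /= enum_rankK.
Qed.


Lemma mix_inj (I : finType) (g1 g2 : I -> X) : injective g1 -> injective g2 ->
  (forall i j, g1 i <> g2 j) ->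
  injective (fun b : bool * I => if b.1 then g1 b.2 else g2 b.2).
Proof.
move=> i1 i2 d [[] i] [[] j] /=.
- by move/i1 => ->.
- by move/d.
- by move/esym/d.
- by move/i2 => ->.
Qed.

Lemma pick_fresh (A : set X) (l : seq X) : ~ finite_set A ->
  exists z, A z /\ z \notin l.
Proof.
move=> infA; apply: contrapT => nz; apply: infA.
apply: (@sub_finite_set _ _ [set` l]); last exact: finite_seq.
move=> z Az /=; apply: contrapT => zl; apply: nz; exists z; split => //.
by apply/negP.
Qed.

Lemma choose_fresh (J : finType) (C : J -> set X) (avoid : seq X) :
  (forall j, ~ finite_set (C j)) ->
  exists p : J -> X, injective p /\ forall j, C j (p j) /\ p j \notin avoid.
Proof.
move=> infC.
suff [p [Hp ip]] : exists p : J -> X, (forall j, j \in enum J -> C j (p j) /\ p j \notin avoid)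
   /\ {in enum J &, injective p}.
  exists p; split; last by move=> j; apply: Hp; rewrite mem_enum.
  by move=> i j e; apply: ip => //; rewrite mem_enum.
elim: (enum J) => [|j js [p [Hp ip]]].
  by exists (fun j => projT1 (cid (pick_fresh avoid (infC j)))); split.
have [z [Cz zn]] := pick_fresh (avoid ++ map p js) (infC j).
exists (fun k => if k == j then z else p k); split.
  move=> k; rewrite inE; case: eqP => [-> _|_ /= kjs]; first by split => //; move: zn; rewrite mem_cat negb_or => /andP[].
  exact: Hp.
move=> k1 k2; rewrite !inE.
have zp k : k \in js -> z <> p k.
  move=> kjs zk; move: zn; rewrite mem_cat negb_or zk => /andP[_ /negP]; apply.
  exact: map_f.
case: (eqVneq k1 j) => [->|n1]; case: (eqVneq k2 j) => [->|n2] //=; rewrite ?eqxx ?(negbTE n1) ?(negbTE n2) /=.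
- by move=> _ k2s e; case: (zp _ k2s e).
- by move=> k1s _ e; case: (zp _ k1s (esym e)).
- by move=> k1s k2s; apply: ip.
Qed.

Hypothesis INF : forall x : X, ~ finite_set [set y | similar_pts x y].

Lemma key (f : X -> X) : is_homeo f -> forall s : seq X,
  exists h, derived_homeo h /\ forall x, x \in s -> h x = f x.
Proof.
move=> hf s.
pose I : finType := seq_sub s.
have infC : forall j : I * 'I_3, ~ finite_set [set y | cnj (val j.1) y].
  move=> j; move: (val j.1) => x fin; case: (@INF x).
  by apply: (sub_finite_set _ fin) => y /similar_cnj.
pose avoid := map val (enum I) ++ map (f \o val) (enum I).
have [p [ip Hp]] := @choose_fresh _ _ avoid infC.
pose o0 := @Ordinal 3 0 isT; pose o1 := @Ordinal 3 1 isT; pose o2 := @Ordinal 3 2 isT.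
pose u i := p (i, o0); pose v i := p (i, o1); pose w i := p (i, o2).
have pinj (c : 'I_3) : injective (fun i => p (i, c)).
  by move=> i j /ip [].
have pdiff (c d : 'I_3) i j : c != d -> p (i, c) <> p (j, d).
  by move=> cd /ip [_ e]; move: cd; rewrite e eqxx.
have avx (c : 'I_3) (i j : I) : val i <> p (j, c).
  move=> e; have := (Hp (j, c)).2; rewrite -e mem_cat negb_or => /andP[H _]; move/negP: H; apply.
  by apply/mapP; exists i; rewrite ?mem_enum.
have avy (c : 'I_3) (i j : I) : f (val i) <> p (j, c).
  move=> e; have := (Hp (j, c)).2; rewrite -e mem_cat negb_or => /andP[_ H]; move/negP: H; apply.
  by apply/mapP; exists i; rewrite ?mem_enum.
have cp (c : 'I_3) (i : I) : cnj (val i) (p (i, c)) := (Hp (i, c)).1.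
have [b [hb Hb]] := @FTfin (bool * I)%type
  (fun q : bool * I => if q.1 then u q.2 else v q.2)
  (fun q : bool * I => if q.1 then val q.2 else w q.2)
  (@mix_inj I _ _ (pinj o0) (pinj o1) (fun i j => pdiff o0 o1 i j isT))
  (@mix_inj I _ _ (@val_inj _ _ I) (pinj o2) (fun i j => avx o2 i j))
  (fun q => match q with (true, i) => cnj_sym (cp o0 i)
             | (false, i) => cnj_trans (cnj_sym (cp o1 i)) (cp o2 i) end).
have finj : injective f by case: hf => _ [f' [ff' _ _]]; exact: can_inj ff'.
have fi (i : I) : cnj (val i) (f (val i)) by exists f.
have [a [ha Ha]] := @FTfin (bool * I)%type
  (fun q : bool * I => if q.1 then v q.2 else w q.2)
  (fun q : bool * I => if q.1 then u q.2 else f (val q.2))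
  (@mix_inj I _ _ (pinj o1) (pinj o2) (fun i j => pdiff o1 o2 i j isT))
  (@mix_inj I _ _ (pinj o0) (fun i j e => @val_inj _ _ I _ _ (finj _ _ e)) (fun i j e => avy o0 j i (esym e)))
  (fun q => match q with (true, i) => cnj_trans (cnj_sym (cp o1 i)) (cp o0 i)
             | (false, i) => cnj_trans (cnj_sym (cp o2 i)) (fi i) end).
case: ha => ca [a' [aa' a'a ca']].
case: hb => cb [b' [bb' b'b cb']].
exists (a \o b \o a' \o b' \o id); split.
  by apply: derived_comm => //; apply: derived_id.
move=> x xs; pose i : I := SeqSub xs.
have e1 := Hb (true, i); have e2 := Hb (false, i).
have e3 := Ha (true, i); have e4 := Ha (false, i).
rewrite /= in e1 e2 e3 e4.
have -> : (a \o b \o a' \o b' \o id) x = a (b (a' (b' x))) by [].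
by rewrite -{1}e1 bb' -e3 aa' e2 e4.
Qed.
End Alg.

Theorem proposition17 (X : topologicalType) :
  scattered X -> fully_transitive X ->
  (forall x : X, ~ finite_set [set y | similar_pts x y]) ->
  homeo_topologically_perfect X.
Proof.
move=> _ FT INF f hf.
apply: closure_of_agree => s.
exact: (key FT INF hf s).
Qed.
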